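(* Let $k$ be a positive integer, let $f$ be a $(2k+1)$-coloring automorphism, and let $L$ be a link with $\det L\neq0$ admitting non-trivial $(2k+1)$-colorings. Then no set $S\subseteq\{f(0),f(1),\dots,f(k)\}$ is a $(2k+1)$-sufficient set of colors for $L$.
   Context: For a positive integer $n$, an $n$-coloring of a link diagram is an assignment of an element of $\mathbf{Z}/n\mathbf{Z}$ to each arc such that at every crossing, with over-arc color $b$ and under-arc colors $a,c$, $2b-a-c\equiv 0\pmod n$; it is non-trivial if at least two distinct colors are used. An $n$-coloring automorphism is a permutation $f$ of $\mathbf{Z}/n\mathbf{Z}$ satisfying $f(2b-a)=2f(b)-f(a)$ for all $a,b$. An $n$-sufficient set of colors for $L$ is a set of residues mod $n$ such that some diagram of $L$ admits a non-trivial $n$-coloring using only colors from this set. $\det L$ is the determinant of $L$. *)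

(* Defs.v *)
From mathcomp Require Import all_boot all_order all_algebra.
Set Implicit Arguments. Unset Strict Implicit. Unset Printing Implicit Defensive.
Import GRing.Theory Num.Theory.
Local Open Scope ring_scope.

(* A (combinatorial) link diagram: arcs are 0 .. narcs-1; each crossing is
   a triple (over-arc, under-arc, under-arc). *)
Record diagram := Diagram {
  narcs : nat;
  crossings : seq ('I_narcs * 'I_narcs * 'I_narcs) }.

Definition is_coloring' (n : nat) (D : diagram) (col : 'I_(narcs D) -> 'Z_n) : Prop :=
  forall b a c, (b, a, c) \in crossings D -> 2%:R * col b - col a - col c = 0.

Definition nontrivial_coloring (n : nat) (D : diagram) (col : 'I_(narcs D) -> 'Z_n) : Prop :=
  is_coloring' col /\ exists i j, col i != col j.

Definition coloring_automorphism (n : nat) (f : 'Z_n -> 'Z_n) : Prop :=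
  bijective f /\ forall a b : 'Z_n, f (2%:R * b - a) = 2%:R * f b - f a.

Definition sufficient_for_diagram (n : nat) (D : diagram) (S : {set 'Z_n}) : Prop :=
  exists col : 'I_(narcs D) -> 'Z_n, nontrivial_coloring col /\ forall i, col i \in S.

(* Coloring matrix (rows = crossings, columns = arcs), entries over int. *)
Definition crossing_nat (D : diagram) : seq (nat * nat * nat) :=
  [seq (val x.1.1, val x.1.2, val x.2) | x <- crossings D].

Definition cmx_entry (x : nat * nat * nat) (j : nat) : int :=
  2%:Z * (x.1.1 == j)%:Z - (x.1.2 == j)%:Z - (x.2 == j)%:Z.

Definition first_minor (D : diagram) : 'M[int]_((narcs D).-1) :=
  \matrix_(i, j) cmx_entry (nth (0%N, 0%N, 0%N) (crossing_nat D) i.+1) j.+1.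

(* Determinant of the link presented by D: |first minor of the coloring matrix|
   when #crossings = #arcs (no crossingless components); a diagram with a
   crossingless component is split (det 0) unless it is the trivial
   one-arc diagram of the unknot (det 1). *)
Definition det_diagram (D : diagram) : nat :=
  if size (crossings D) == narcs D then `|\det (first_minor D)|%N
  else if (crossings D == [::]) && (narcs D == 1%N) then 1%N else 0%N.

(* Main.v *)
Require Import Defs.
From mathcomp Require Import all_boot all_order all_algebra.
From mathcomp Require Import zify ring.
Import GRing.Theory Num.Theory.
Local Open Scope ring_scope.

Lemma sum_pick (N : nat) (b : 'I_N) (F : 'I_N -> int) :
  \sum_(m < N) ((nat_of_bool (val b == val m))%:Z * F m) = F b.
Proof.
rewrite (bigD1 b) //= eqxx mul1r big1 ?addr0 // => m hm.
have -> : (val b == val m) = false.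
  by apply/eqP => /val_inj hbm; rewrite hbm eqxx in hm.
by rewrite mul0r.
Qed.

Lemma minor_det0 (D : diagram) (w : 'I_(narcs D) -> nat) :
  (forall b a c, (b, a, c) \in crossings D -> (2 * w b = w a + w c)%N) ->
  (exists i j, w i != w j) -> size (crossings D) = narcs D ->
  \det (first_minor D) = 0.
Proof.
case: D w => n cr /= w hw hex hsz.
case: n cr w hw hex hsz => [|n] cr w hw [i [j hij]] hsz; first by case: i hij.
set V : nat -> int := fun m => (w (inord m))%:Z - (w ord0)%:Z.
have V0 : V 0%N = 0.
  have e0 : (inord 0 : 'I_n.+1) = ord0 by apply/val_inj; rewrite /= inordK.
  by rewrite /V e0 subrr.
have Vv : forall t : 'I_n.+1, V t = (w t)%:Z - (w ord0)%:Z by move=> t; rewrite /V inord_val.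
set A := first_minor _.
set u : 'cV[int]_n := \col_j V j.+1.
have Au : A *m u = 0.
  apply/matrixP => r z; rewrite !mxE.
  under eq_bigr do rewrite !mxE.
  set x := nth _ _ _.
  have : x \in crossing_nat (Diagram cr).
    apply: mem_nth; rewrite /crossing_nat size_map /= hsz; exact: ltn_ord r.
  case/mapP => [[[b a] c] hin ->].
  have e := hw _ _ _ hin.
  have -> : \sum_(j0 < n) cmx_entry (val (b, a, c).1.1, val (b, a, c).1.2, val (b, a, c).2) j0.+1 * V j0.+1
     = \sum_(m < n.+1) cmx_entry (val b, val a, val c) m * V m.
    by rewrite big_ord_recl /= V0 mulr0 add0r.
  rewrite /cmx_entry /=.
  under eq_bigr do rewrite !mulrBl -mulrA.
  rewrite !sumrB -mulr_sumr.
  rewrite (@sum_pick _ b V) (@sum_pick _ a V) (@sum_pick _ c V).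
  rewrite !Vv.
  have : (2 * w b)%:Z = (w a + w c)%:Z by rewrite e.
  move=> h; lia.
have [t ht] : exists t : 'I_n.+1, w t != w ord0.
  case: (eqVneq (w i) (w ord0)) => hi; last by exists i.
  exists j; apply: contra hij => /eqP ->; by rewrite hi.
have t0 : (0 < val t)%N.
  rewrite lt0n; apply: contra ht => /eqP h.
  have -> : t = ord0 by apply/val_inj.
  by [].
have tlt : ((val t).-1 < n)%N by rewrite -ltnS prednK // ltn_ord.
have hu : u (Ordinal tlt) 0 != 0.
  rewrite mxE /= prednK // Vv subr_eq0; apply: contra ht => /eqP h.
  by apply/eqP; case: h.
have : \det A *: u = 0 by rewrite -mul_scalar_mx -mul_adj_mx -mulmxA Au mulmx0.
move/matrixP => /(_ (Ordinal tlt) 0); rewrite !mxE => /eqP.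
move: hu; rewrite mxE => hu; rewrite mulf_eq0 (negbTE hu) orbF => /eqP //.
Qed.

Theorem corollary4p1 (k : nat) (hk : (0 < k)%N)
  (f : 'Z_(2 * k + 1) -> 'Z_(2 * k + 1)) (hf : coloring_automorphism f)
  (D : diagram) (hdet : det_diagram D <> 0%N)
  (hcol : exists col : 'I_(narcs D) -> 'Z_(2 * k + 1), nontrivial_coloring col)
  (S : {set 'Z_(2 * k + 1)})
  (hS : S \subset [set f (i%:R) | i : 'I_k.+1]) :
  ~ sufficient_for_diagram D S.
Proof.
move=> [col [[hc [i [j hij]]] hin]].
case: hf => [[g fg gf] hom].
have hp : (1 < 2 * k + 1)%N by lia.
have ghom : forall a b, g (2%:R * b - a) = 2%:R * g b - g a.
  by move=> a b; apply: (can_inj fg); rewrite gf hom !gf.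
pose w := fun i => nat_of_ord (g (col i)).
have wle : forall i, (w i <= k)%N.
  move=> t; rewrite /w; move/subsetP: hS => /(_ _ (hin t)) /imsetP [m _ ->].
  rewrite fg val_Zp_nat //.
  by apply: leq_trans (leq_mod _ _) _; rewrite -ltnS ltn_ord.
have hw : forall b a c, (b, a, c) \in crossings D -> (2 * w b = w a + w c)%N.
  move=> b a c /hc /subr0_eq hbc.
  have gc : g (col c) = 2%:R * g (col b) - g (col a) by rewrite -hbc ghom.
  have e : ((2 * w b)%:R : 'Z_(2 * k + 1)) = (w a + w c)%:R.
    by rewrite natrD natrM /w !natr_Zp gc; ring.
  have := congr1 (@nat_of_ord _) e; rewrite !val_Zp_nat // !modn_small //.
    by have := wle a; have := wle c; lia.
  by have := wle b; lia.
have hnt : exists i j, w i != w j.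
  exists i, j; apply: contra hij => /eqP h; apply/eqP.
  by apply: (can_inj gf); apply: val_inj.
move: hdet; rewrite /det_diagram.
case: eqP => hsz.
  by rewrite (@minor_det0 D w hw hnt hsz).
case: ifP => // /andP [_ /eqP h1] _.
have hv : nat_of_ord i = nat_of_ord j.
  by move: (ltn_ord i) (ltn_ord j) h1 => ? ? ?; lia.
by move: hij; rewrite (val_inj hv) eqxx.
Qed.
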